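(* Let $(S,K,I)$ be a split graph. If $A_4(S)$ is connected, then $\Phi(S)$ is connected.
   Context: All graphs are finite and simple. A split graph is a graph $S$ whose vertex set is a disjoint union $V(S)=K\,\dot\cup\,I$ with $K$ a clique and $I$ an independent set; $(K,I)$ is called a bipartition of $S$, and $(S,K,I)$ denotes $S$ together with this fixed bipartition. A 2-switch in a graph $G$ is performed on four distinct vertices $a,b,c,d$ with $ab,cd\in E(G)$ and $ac,bd\notin E(G)$: it deletes $ab,cd$ and adds $ac,bd$; $a,b,c,d$ are said to participate in it. $A_4(G)$ is the graph with vertex set $V(G)$ in which distinct $u,v$ are adjacent iff some 2-switch on $G$ has both $u$ and $v$ among its participating vertices. For a split graph $(S,K,I)$ and distinct $u,v\in I$, $\sigma_{uv}(S)$ is the number of induced subgraphs of $S$ isomorphic to $P_4$ containing both $u$ and $v$. The factor graph $\Phi(S)$ is the loopless multigraph with vertex set $I$ having exactly $\sigma_{uv}(S)$ parallel edges between $u$ and $v$. Graph notions (connected, complete, clique, etc.) applied to $\Phi(S)$ refer to its underlying simple graph, in which $u\sim v$ iff $\sigma_{uv}(S)\ge1$. *)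

(* Defs.v *)
From mathcomp Require Import all_boot.
Set Implicit Arguments. Unset Strict Implicit. Unset Printing Implicit Defensive.

Definition simple_graph (T : finType) (e : rel T) : Prop :=
  irreflexive e /\ symmetric e.

Definition split_bipartition (T : finType) (e : rel T) (K I : {set T}) : Prop :=
  [/\ K :|: I = [set: T], [disjoint K & I],
      (forall x y, x \in K -> y \in K -> x != y -> e x y)
    & (forall x y, x \in I -> y \in I -> ~~ e x y)].

Definition two_switch (T : finType) (e : rel T) (a b c d : T) : bool :=
  [&& uniq [:: a; b; c; d], e a b, e c d, ~~ e a c & ~~ e b d].

Definition A4_adj (T : finType) (e : rel T) : rel T := fun u v =>
  (u != v) && [exists a, exists b, exists c, exists d,
     [&& two_switch e a b c d, u \in [set a; b; c; d] & v \in [set a; b; c; d]]].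

Definition induces_P4 (T : finType) (e : rel T) (X : {set T}) : bool :=
  [exists a, exists b, exists c, exists d,
    [&& uniq [:: a; b; c; d], X == [set a; b; c; d],
        e a b, e b c, e c d, ~~ e a c, ~~ e a d & ~~ e b d]].

Definition sigma (T : finType) (e : rel T) (u v : T) : nat :=
  #|[set X : {set T} | [&& induces_P4 e X, u \in X & v \in X]]|.

(* Underlying simple graph of the factor graph Phi(S), on vertex set I. *)
Definition Phi_adj (T : finType) (e : rel T) (I : {set T}) : rel T := fun u v =>
  [&& u \in I, v \in I, u != v & 0 < sigma e u v].

(* A graph with vertex set V and adjacency r (r only relating vertices of V)
   is connected if any two vertices of V are joined by a path. *)
Definition connected_on (T : finType) (V : {set T}) (r : rel T) : Prop :=
  forall u v, u \in V -> v \in V -> connect r u v.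

(* Main.v *)
Require Import Defs.
From mathcomp Require Import all_boot.
Set Implicit Arguments.
Unset Strict Implicit.

Section Proof.
Variables (T : finType) (e : rel T) (K I : {set T}).
Hypotheses (Hirr : irreflexive e) (Hsym : symmetric e)
  (HKI : K :|: I = [set: T]) (Hdis : [disjoint K & I])
  (HK : forall x y, x \in K -> y \in K -> x != y -> e x y)
  (HI : forall x y, x \in I -> y \in I -> ~~ e x y).

Definition good p q r s := [&& p \in I, s \in I, q \in K, r \in K, p != s,
  q != r, e p q, e r s, ~~ e p r & ~~ e q s].

Definition mem4 (x p q r s : T) := [|| x == p, x == q, x == r | x == s].

Lemma KorI x : (x \in K) || (x \in I).
Proof. have : x \in K :|: I by rewrite HKI inE. by rewrite inE. Qed.

Lemma notKI x : x \in K -> x \in I -> False.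
Proof. by move=> xK; rewrite (disjointFr Hdis xK). Qed.

Lemma neqIK x y : x \in I -> y \in K -> x != y.
Proof. move=> xI yK; apply/eqP => exy. move: yK; rewrite -exy => yK. exact: notKI yK xI. Qed.

Lemma good_rev p q r s : good p q r s -> good s r q p.
Proof.
case/and5P => pI sI qK rK /and5P[ps qr pq rs /andP[pr qs]].
rewrite /good sI pI rK qK /= (eq_sym s) ps (eq_sym r) qr (Hsym s) rs (Hsym q) pq (Hsym s) qs (Hsym r) pr.
by []. Qed.

Let Phi := Phi_adj e I.

Lemma Phi_sym : connect_sym Phi.
Proof.
apply: sym_connect_sym => x y; rewrite /Phi /Phi_adj.
have -> : sigma e x y = sigma e y x.
  rewrite /sigma; apply: eq_card => X; rewrite !inE.
  by rewrite [(x \in X) && _]andbC.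
by rewrite andbA [(x \in I) && _]andbC -andbA (eq_sym x).
Qed.

Lemma good_Phi p q r s : good p q r s -> Phi p s.
Proof.
case/and5P => pI sI qK rK /and5P[ps qr pq rs /andP[pr qs]].
rewrite /Phi /Phi_adj pI sI ps /=.
apply/card_gt0P; exists [set p; q; r; s]; rewrite !inE !eqxx /= !orbT andbT.
apply/existsP; exists p; apply/existsP; exists q; apply/existsP; exists r;
apply/existsP; exists s.
rewrite eqxx pq rs pr qs (HK qK rK qr) /=.
rewrite (HI pI sI) /= andbT !inE !negb_or.
rewrite (neqIK pI qK) (neqIK pI rK) ps qr (eq_sym q) (neqIK sI qK) (eq_sym r) (neqIK sI rK).
by [].
Qed.

Lemma good_conn p q r s : good p q r s -> connect Phi p s /\ connect Phi s p.
Proof.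
move=> /good_Phi H; have H1 := connect1 H; split => //.
by rewrite Phi_sym.
Qed.

Lemma ctrans x y z : connect Phi x y -> connect Phi y z -> connect Phi x z.
Proof. exact: connect_trans. Qed.

Lemma adjI_K x y : x \in I -> e x y -> y \in K.
Proof.
move=> xI xy; have := KorI y; case: (boolP (y \in I)) => yI; last by rewrite orbF.
by move: (HI xI yI); rewrite xy.
Qed.

Lemma nonadjK_I x y : x \in K -> x != y -> ~~ e x y -> y \in I.
Proof.
move=> xK xy nxy; have := KorI y; case: (boolP (y \in K)) => yK //.
by move: (HK xK yK xy); rewrite (negbTE nxy).
Qed.

Lemma ts_good a b c d : two_switch e a b c d -> good a b c d \/ good b a d c.
Proof.
case/and5P => U ab cd ac bd.
move: U; rewrite /= !inE !negb_or !andbT => /and3P[/and3P[nab nac nad] /andP[nbc nbd] ncd].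
case: (boolP (a \in I)) => aI.
  have bK := adjI_K aI ab.
  have dI := nonadjK_I bK nbd bd.
  have cK : c \in K by apply: (adjI_K dI); rewrite Hsym.
  left; by rewrite /good aI dI bK cK nad nbc ab cd ac bd.
have aK : a \in K by have := KorI a; rewrite (negbTE aI) orbF.
have cI := nonadjK_I aK nac ac.
have dK := adjI_K cI cd.
have bI : b \in I by apply: (nonadjK_I dK); rewrite 1?eq_sym // Hsym.
right; by rewrite /good bI cI aK dK nbc nad (Hsym b) ab (Hsym d) cd bd ac.
Qed.

Lemma core a k c d a' c' d' : good a k c d -> good a' k c' d' -> connect Phi a a'.
Proof.
move=> g1; move: (g1).
case/and5P=> aI dI kK cK /and5P[ad kc ak cd /andP[ac kd]].
move=> g2; move: (g2).
case/and5P=> a'I d'I _ c'K /and5P[a'd' kc' a'k c'd' /andP[a'c' kd']].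
have [->|aa'] := eqVneq a a'; first exact: connect0.
case: (boolP (e a' c)) => a'c; last first.
  have a'd : a' != d by apply: contraNneq kd => E; rewrite -E (Hsym k).
  have g : good a' k c d by rewrite /good a'I dI kK cK kc a'k cd a'c kd a'd.
  exact: ctrans (good_conn g1).1 (good_conn g).2.
have cc' : c != c' by apply: contraNneq a'c' => E; rewrite -E.
case: (boolP (e a c')) => ac'.
  have g : good a c' c a'.
    by rewrite /good aI a'I c'K cK aa' eq_sym cc' ac' (Hsym c) a'c ac (Hsym c') a'c'.
  exact: connect1 (good_Phi g).
have ad' : a != d' by apply: contraNneq kd' => E; rewrite -E (Hsym k).
have g : good a k c' d' by rewrite /good aI d'I kK c'K kc' ak c'd' ac' kd' ad'.
exact: ctrans (good_conn g).1 (good_conn g2).2.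
Qed.

Ltac KIcontra := match goal with
  H1 : _, H2 : _ |- _ => case: (notKI H1 H2) end.

Lemma share p q r s p' q' r' s' z : good p q r s -> good p' q' r' s' ->
  mem4 z p q r s -> mem4 z p' q' r' s' -> connect Phi p p'.
Proof.
move=> g g'.
have [g1 g2] := good_conn g; have [g1' g2'] := good_conn g'.
have gr := good_rev g; have gr' := good_rev g'.
move: (g) (g') => /and5P[pI sI qK rK _] /and5P[p'I s'I q'K r'K _].
case/or4P => /eqP E1; case/or4P => /eqP E2; have E := etrans (esym E1) E2.
- by rewrite E; exact: connect0.
- by rewrite E in pI; KIcontra.
- by rewrite E in pI; KIcontra.
- by rewrite E.
- by rewrite -E in p'I; KIcontra.
- by rewrite E in g; exact: core g g'.
- by rewrite E in g; exact: ctrans (core g gr') g2'.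
- by rewrite -E in s'I; KIcontra.
- by rewrite -E in p'I; KIcontra.
- by rewrite E in gr; exact: ctrans g1 (core gr g').
- by rewrite E in gr; exact: ctrans g1 (ctrans (core gr gr') g2').
- by rewrite -E in s'I; KIcontra.
- by rewrite -E.
- by rewrite E in sI; KIcontra.
- by rewrite E in sI; KIcontra.
- by apply: ctrans g1 _; rewrite E.
Qed.

Lemma mem4_rev x p q r s : mem4 x p q r s -> mem4 x s r q p.
Proof. by rewrite /mem4; case/or4P => ->; rewrite ?orbT. Qed.

Lemma mem4_sw x p q r s : mem4 x p q r s -> mem4 x q p s r.
Proof. by rewrite /mem4; case/or4P => ->; rewrite ?orbT. Qed.

Definition Inv u x := exists p q r s, [/\ good p q r s, mem4 x p q r s & connect Phi u p].

Lemma step u x y : u \in I -> A4_adj e x y -> (x = u \/ Inv u x) -> Inv u y.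
Proof.
move=> uI /andP[_ /existsP[a /existsP[b /existsP[c /existsP[d /and3P[ts xm ym]]]]]] H.
have mc : forall z, z \in [set a; b; c; d] -> mem4 z a b c d.
  by move=> z; rewrite !inE -!orbA.
have gen : forall p q r s, good p q r s -> mem4 x p q r s -> mem4 y p q r s -> Inv u y.
  move=> p q r s G mx my; case: H => [xu | [p0 [q0 [r0 [s0 [G0 m0 c0]]]]]].
    subst x; move: (G) => /and5P[pI sI qK rK _].
    case/or4P: mx => /eqP E; rewrite E in uI.
    - by exists p, q, r, s; split => //; rewrite E; exact: connect0.
    - KIcontra.
    - KIcontra.
    - exists s, r, q, p; split => //; [exact: good_rev | exact: mem4_rev | rewrite E; exact: connect0].
  exists p, q, r, s; split => //; exact: ctrans c0 (share G0 G m0 mx).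
case: (ts_good ts) => g.
  exact: gen g (mc _ xm) (mc _ ym).
exact: gen g (mem4_sw (mc _ xm)) (mem4_sw (mc _ ym)).
Qed.

Lemma walk u : u \in I -> forall pth x, path (A4_adj e) x pth ->
  (x = u \/ Inv u x) -> (last x pth = u \/ Inv u (last x pth)).
Proof.
move=> uI; elim=> [|y pth IH] x /=; first done.
case/andP => xy pp H; apply: IH pp _; right; exact: step uI xy H.
Qed.

Lemma main u v : u \in I -> v \in I -> connect (A4_adj e) u v -> connect Phi u v.
Proof.
move=> uI vI /connectP[pth Hp Ev].
have := walk uI Hp (or_introl erefl); rewrite -Ev.
case => [-> | [p [q [r [s [G m c]]]]]]; first exact: connect0.
move: (G) => /and5P[pI sI qK rK _].
case/or4P: m => /eqP E; subst.
- exact: c.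
- KIcontra.
- KIcontra.
- exact: ctrans c (good_conn G).1.
Qed.

End Proof.
Unset Implicit Arguments.


Theorem theorem2p4 (T : finType) (e : rel T) (K I : {set T}) :
  simple_graph e -> split_bipartition e K I ->
  connected_on [set: T] (A4_adj e) ->
  connected_on I (Phi_adj e I).
Proof.
move=> [Hirr Hsym] [HKI Hdis HK HI] Hc u v uI vI.
have H := Hc u v (in_setT u) (in_setT v).
eapply main; eassumption.
Qed.
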